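(* Let $A\in\mathbb R^{n\times n}$ be symmetric with $A\not\succeq0$, $a,x_0,b_1,\ldots,b_p\in\mathbb R^n$, $u,\beta_1,\ldots,\beta_p\in\mathbb R$. Consider \[ ({\rm ETRS})\quad \min_{x\in\mathbb R^n}\ x^TAx+a^Tx\quad\text{s.t.}\quad \|x-x_0\|^2\le u,\quad b_i^Tx\le\beta_i,\ i=1,\ldots,p. \] Suppose \[ \dim\Big({\rm span}\big(\{b_1,\ldots,b_p\}\cup\mathcal R(A-\lambda_{\min}(A)I_n)\big)\Big)\le n-1. \] Then (ETRS) is equivalent to (in particular has the same optimal value as) the convex problem \[ \min_{x}\ x^T(A-\lambda_{\min}(A)I_n)x+a^Tx+\lambda_{\min}(A)(u+2x^Tx_0-\|x_0\|^2)\quad\text{s.t.}\quad \|x-x_0\|^2\le u,\quad b_i^Tx\le\beta_i,\ i=1,\ldots,p. \]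
   Context: $\lambda_{\min}(A)$ is the smallest eigenvalue of $A$; $\mathcal R(\cdot)$ denotes the range of a matrix; $I_n$ is the identity; $\|\cdot\|$ is the Euclidean norm. *)

(* Defs.v *)
From HB Require Import structures.
From mathcomp Require Import all_boot all_order all_algebra.
From mathcomp Require Export reals.
Set Implicit Arguments. Unset Strict Implicit. Unset Printing Implicit Defensive.
Import Order.TTheory GRing.Theory Num.Theory.
Local Open Scope ring_scope.

Definition qform (R : realType) (n : nat) (A : 'M[R]_n) (x : 'cV[R]_n) : R :=
  (x^T *m A *m x) 0 0.
Definition dotv (R : realType) (n : nat) (a x : 'cV[R]_n) : R := (a^T *m x) 0 0.
Definition sqnorm (R : realType) (n : nat) (x : 'cV[R]_n) : R := dotv x x.

Definition psd (R : realType) (n : nat) (A : 'M[R]_n) : Prop :=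
  forall x : 'cV[R]_n, 0 <= qform A x.

Definition is_lambda_min (R : realType) (n : nat) (A : 'M[R]_n) (lam : R) : Prop :=
  eigenvalue A lam /\ (forall mu : R, eigenvalue A mu -> lam <= mu).

Definition feasible (R : realType) (n p : nat) (x0 : 'cV[R]_n) (u : R)
  (b : 'I_p -> 'cV[R]_n) (beta : 'I_p -> R) (x : 'cV[R]_n) : Prop :=
  sqnorm (x - x0) <= u /\ (forall i, dotv (b i) x <= beta i).

Definition is_opt_value (R : realType) (n : nat) (F : 'cV[R]_n -> Prop)
  (f : 'cV[R]_n -> R) (v : R) : Prop :=
  (exists2 x, F x & f x = v) /\ (forall y, F y -> v <= f y).

Definition rows_of (R : realType) (n p : nat) (b : 'I_p -> 'cV[R]_n) : 'M[R]_(p, n) :=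
  \matrix_(i < p, j < n) b i j 0.

(* Main.v *)
Require Import Defs.
From HB Require Import structures.
From mathcomp Require Import all_boot all_order all_algebra.
From mathcomp Require Import reals.
From mathcomp Require Import boolp classical_sets topology normedtype derive.
From mathcomp Require Import ring lra.
Import Order.TTheory GRing.Theory Num.Theory.
Import numFieldTopology.Exports.
Local Open Scope ring_scope.
Local Open Scope classical_set_scope.

Section S.
Variable R : realType.
Variable n : nat.

Lemma cont_sum (I : Type) (s : seq I) (F : I -> 'rV[R]_n -> R) :
  (forall i, continuous (F i)) -> continuous (fun v => \sum_(i <- s) F i v).
Proof.
move=> H; elim: s => [|i s IH].
  under eq_fun do rewrite big_nil. exact: cst_continuous.
under eq_fun do rewrite big_cons.
move=> v; have := (@continuousD R R^o _ (F i) (fun v => \sum_(j <- s) F j v) v (H i v) (IH v)).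
exact.
Qed.

Lemma cont_mul (f g : 'rV[R]_n -> R) : continuous f -> continuous g ->
  continuous (fun v => f v * g v).
Proof. by move=> hf hg v; exact: (@continuousM R _ f g v (hf v) (hg v)). Qed.

Definition Qf (A : 'M[R]_n) (v : 'rV[R]_n) : R := (v *m A *m v^T) 0 0.
Definition Bf (A : 'M[R]_n) (v w : 'rV[R]_n) : R := (v *m A *m w^T) 0 0.

Lemma Qf_sum A v : Qf A v = \sum_j (\sum_i v 0 i * A i j) * v 0 j.
Proof. by rewrite /Qf !mxE; apply: eq_bigr => j _; rewrite !mxE. Qed.

Lemma Qf_cont A : continuous (Qf A).
Proof.
have -> : Qf A = (fun v => \sum_(j <- index_enum 'I_n) (\sum_(i <- index_enum 'I_n) v 0 i * A i j) * v 0 j).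
  by apply: funext => v; rewrite Qf_sum.
apply: cont_sum => j; apply: cont_mul; last exact: coord_continuous.
apply: cont_sum => i; apply: cont_mul; first exact: coord_continuous.
exact: cst_continuous.
Qed.

Lemma N_sum v : Qf 1%:M v = \sum_j v 0 j ^+ 2.
Proof. by rewrite /Qf mulmx1 !mxE; apply: eq_bigr => j _; rewrite !mxE expr2. Qed.

Lemma N_ge0 v : 0 <= Qf 1%:M v.
Proof. by rewrite N_sum; apply: sumr_ge0 => i _; exact: sqr_ge0. Qed.

Lemma N_eq0 v : Qf 1%:M v = 0 -> v = 0.
Proof.
rewrite N_sum => /eqP; rewrite psumr_eq0; last by move=> i _; exact: sqr_ge0.
move=> /allP H; apply/rowP => j; rewrite mxE.
by have := H j (mem_index_enum j); rewrite sqrf_eq0 => /eqP.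
Qed.

Lemma QfZ A k v : Qf A (k *: v) = k ^+ 2 * Qf A v.
Proof.
rewrite /Qf -(scalemxAl k v A).
have -> : (k *: v)^T = k *: v^T by apply/matrixP => i j; rewrite !mxE.
by rewrite -scalemxAr -(scalemxAl k (v *m A)) !mxE mulrA expr2.
Qed.

Lemma Qf0 A : Qf A 0 = 0.
Proof. by rewrite /Qf !mul0mx mxE. Qed.

Lemma BfC A v w : A^T = A -> Bf A v w = Bf A w v.
Proof.
move=> sA; rewrite /Bf.
have E (M : 'M[R]_1) : M 0 0 = (M^T) 0 0 by rewrite mxE.
rewrite [LHS]E.
by rewrite !trmx_mul trmxK sA mulmxA.
Qed.

Lemma QfD A v w : A^T = A -> Qf A (v + w) = Qf A v + 2 * Bf A v w + Qf A w.
Proof.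
move=> sA; have addE (M N : 'M[R]_1) : (M + N) 0 0 = M 0 0 + N 0 0 by rewrite mxE.
rewrite /Qf linearD /= mulmxDl mulmxDr !mulmxDl !addE.
have := BfC A w v sA; rewrite /Bf => ->; ring.
Qed.

Lemma QfB (A : 'M[R]_n) (m : R) (v : 'rV[R]_n) : Qf (A - m%:M) v = Qf A v - m * Qf 1%:M v.
Proof.
rewrite /Qf mulmxBr mul_mx_scalar mulmx1 mulmxBl -scalemxAl.
by rewrite !mxE.
Qed.

Lemma BfZr (B : 'M[R]_n) (v w : 'rV[R]_n) k : Bf B v (k *: w) = k * Bf B v w.
Proof.
rewrite /Bf.
have -> : (k *: w)^T = k *: w^T by apply/matrixP => i j; rewrite !mxE.
by rewrite -scalemxAr mxE.
Qed.

Lemma normalize (z : 'rV[R]_n) : z != 0 ->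
  exists k, [/\ 0 < k, Qf 1%:M (k *: z) = 1 & k ^+ 2 * Qf 1%:M z = 1].
Proof.
move=> z0.
have Nz : 0 < Qf 1%:M z.
  rewrite lt_neqAle N_ge0 andbT eq_sym; apply: contra z0 => /eqP /N_eq0 ->.
  by [].
set N := Qf 1%:M z.
have sq : 0 < Num.sqrt N by rewrite sqrtr_gt0.
have hk : (Num.sqrt N)^-1 ^+ 2 * N = 1.
  by rewrite exprVn sqr_sqrtr ?ltW // mulVf // gt_eqF.
exists (Num.sqrt N)^-1; split => //; first by rewrite invr_gt0.
by rewrite QfZ.
Qed.

Lemma neg_eig (A : 'M[R]_n) (x : 'rV[R]_n) : A^T = A -> Qf A x < 0 ->
  exists2 m, m < 0 & eigenvalue A m.
Proof.
move=> sA Hx.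
have x0 : x != 0 by apply: contraTneq Hx => ->; rewrite Qf0 ltxx.
pose S := [set v : 'rV[R]_n | Qf 1%:M v = 1].
have [kx [kx0 kxS kxN]] := normalize _ x0.
have Sne : S !=set0 by exists (kx *: x).
have cS : closed S.
  apply: (@preimage_closed _ _ (Qf 1%:M) [set y | y = 1]).
    by move=> y _; exact: Qf_cont.
  exact: closed_eq.
have kS : compact S.
  have cube : compact [set v : 'rV[R]_n | forall i, `[(-1 : R), 1]%classic (v ord0 i)].
    by apply: (@rV_compact _ _ (fun=> `[(-1 : R), 1]%classic)) => _; exact: segment_compact.
  apply: subclosed_compact cS cube _ => v /= Hv i.
  have : v ord0 i ^+ 2 <= 1.
    rewrite -Hv N_sum (bigD1 i) //= lerDl.
    by apply: sumr_ge0 => j _; exact: sqr_ge0.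
  move=> h; rewrite in_itv /=; apply/andP; split; nra.
have cw : {within S, continuous (Qf A)}.
  by apply: continuous_subspaceT; exact: Qf_cont.
have [c cS' cmin] := EVT_min_rV Sne kS cw.
have cS1 : Qf 1%:M c = 1 by move: cS'; rewrite inE.
set m := Qf A c.
have bound : forall z, m * Qf 1%:M z <= Qf A z.
  move=> z; have [->|z0] := eqVneq z 0; first by rewrite !Qf0 mulr0.
  have [k [k0 kS' kN]] := normalize _ z0.
  have := cmin (k *: z) (mem_set kS'); rewrite QfZ -/m => H.
  have := ler_wpM2r (N_ge0 z) H.
  have -> : k ^+ 2 * Qf A z * Qf 1%:M z = (k ^+ 2 * Qf 1%:M z) * Qf A z by ring.
  by rewrite kN mul1r.
have m0 : m < 0.
  have := cmin (kx *: x) (mem_set kxS); rewrite QfZ -/m => H.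
  have kx2 : 0 < kx ^+ 2 by rewrite exprn_gt0.
  nra.
exists m => //.
pose B := A - m%:M.
have sB : B^T = B by rewrite /B linearB /= tr_scalar_mx sA.
have QBge0 : forall z, 0 <= Qf B z by move=> z; rewrite /B QfB subr_ge0.
have QBc : Qf B c = 0 by rewrite /B QfB cS1 mulr1 subrr.
pose w := c *m B.
have Bw : Bf B c w = Qf 1%:M w by rewrite /Bf /Qf mulmx1.
have key : forall t, 0 <= 2 * t * Qf 1%:M w + t ^+ 2 * Qf B w.
  move=> t; have := QBge0 (c + t *: w).
  by rewrite QfD // QBc BfZr Bw QfZ add0r mulrA.
have w0 : Qf 1%:M w = 0.
  set s := Qf 1%:M w; set k0 := Qf B w.
  have s0 : 0 <= s := N_ge0 w.
  have k00 : 0 <= k0 := QBge0 w.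
  pose e := (k0 + 1)^-1.
  have k1 : 0 < k0 + 1 by lra.
  have e0 : 0 < e by rewrite invr_gt0.
  have ek : e * (k0 + 1) = 1 by rewrite mulVf // gt_eqF.
  have := key (- s * e).
  have -> : 2 * (- s * e) * s + (- s * e) ^+ 2 * k0 = - (s ^+ 2 * e * (1 + e)).
    have -> : (- s * e) ^+ 2 * k0 = s ^+ 2 * e * (e * k0) by ring.
    have -> : e * k0 = 1 - e by rewrite -ek; ring.
    ring.
  rewrite oppr_ge0 => h.
  have h2 : 0 <= s ^+ 2 * e * (1 + e).
    apply: mulr_ge0; last lra.
    by apply: mulr_ge0; [exact: sqr_ge0|lra].
  have : s ^+ 2 * e * (1 + e) = 0 by apply/eqP; rewrite eq_le h h2.
  have epos : 0 < e * (1 + e) by apply: mulr_gt0; lra.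
  rewrite -mulrA => /eqP; rewrite mulf_eq0 (gt_eqF epos) orbF expf_eq0 /=.
  by move/eqP.
have := N_eq0 _ w0; rewrite /w /B mulmxBr mul_mx_scalar => /eqP; rewrite subr_eq0 => /eqP cA.
apply/eigenvalueP; exists c => //.
apply/eqP => c0; move: cS1; rewrite c0 Qf0 => /eqP; by rewrite eq_sym oner_eq0.
Qed.
End S.
Arguments Qf {R n}. Arguments Bf {R n}. Arguments N_ge0 {R n}. Arguments N_eq0 {R n}. Arguments neg_eig {R n}.

Section Col.
Variable R : realType.
Variable n : nat.
Implicit Types (x y a : 'cV[R]_n).

Lemma dotvDr a x y : dotv a (x + y) = dotv a x + dotv a y.
Proof. by rewrite /dotv mulmxDr mxE. Qed.
Lemma dotvDl a x y : dotv (x + y) a = dotv x a + dotv y a.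
Proof. by rewrite /dotv linearD /= mulmxDl mxE. Qed.
Lemma dotvBr a x y : dotv a (x - y) = dotv a x - dotv a y.
Proof. by rewrite /dotv mulmxBr !mxE. Qed.
Lemma dotvBl a x y : dotv (x - y) a = dotv x a - dotv y a.
Proof. by rewrite /dotv linearB /= mulmxBl !mxE. Qed.
Lemma dotvZr a (k : R) x : dotv a (k *: x) = k * dotv a x.
Proof. by rewrite /dotv -scalemxAr mxE. Qed.
Lemma dotvZl a (k : R) x : dotv (k *: x) a = k * dotv x a.
Proof.
rewrite /dotv.
have -> : (k *: x)^T = k *: x^T by apply/matrixP => i j; rewrite !mxE.
by rewrite -scalemxAl mxE.
Qed.
Lemma dotvC a x : dotv a x = dotv x a.
Proof.
rewrite /dotv.
have E (M : 'M[R]_1) : M 0 0 = (M^T) 0 0 by rewrite mxE.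
by rewrite [LHS]E trmx_mul trmxK.
Qed.
Lemma dotv_mul (M : 'M[R]_n) x y : dotv x (M *m y) = dotv (M^T *m x) y.
Proof. by rewrite /dotv trmx_mul trmxK mulmxA. Qed.
Lemma qformE (M : 'M[R]_n) x : qform M x = dotv x (M *m x).
Proof. by rewrite /qform /dotv mulmxA. Qed.
Lemma qformB (A : 'M[R]_n) (m : R) x : qform (A - m%:M) x = qform A x - m * sqnorm x.
Proof.
by rewrite /qform /sqnorm /dotv mulmxBr mul_mx_scalar mulmxBl -scalemxAl !mxE.
Qed.
Lemma sqnormE x : sqnorm x = Qf 1%:M x^T.
Proof. by rewrite /sqnorm /dotv /Qf mulmx1 trmxK. Qed.
Lemma sqnorm_ge0 x : 0 <= sqnorm x.
Proof. by rewrite sqnormE N_ge0. Qed.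
Lemma sqnorm_gt0 x : x != 0 -> 0 < sqnorm x.
Proof.
move=> x0; rewrite lt_neqAle sqnorm_ge0 andbT eq_sym; apply: contra x0.
rewrite sqnormE => /eqP /N_eq0 h.
by rewrite -[x]trmxK h trmx0.
Qed.
Lemma sqnormDZ x y (t : R) : sqnorm (x + t *: y) = sqnorm x + 2 * t * dotv x y + t ^+ 2 * sqnorm y.
Proof. rewrite /sqnorm !dotvDl !dotvDr !dotvZl !dotvZr (dotvC y x); ring. Qed.
End Col.
Arguments sqnormDZ {R n}.
Arguments dotvDr {R n}. Arguments dotvDl {R n}. Arguments dotvBr {R n}. Arguments dotvBl {R n}. Arguments dotvZr {R n}. Arguments dotvZl {R n}. Arguments dotvC {R n}. Arguments dotv_mul {R n}. Arguments qformE {R n}. Arguments qformB {R n}. Arguments sqnormE {R n}. Arguments sqnorm_ge0 {R n}. Arguments sqnorm_gt0 {R n}.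

Lemma quad (R : realType) (al be ga c : R) : 0 < al -> ga <= 0 ->
  exists t, al * t ^+ 2 + 2 * be * t + ga = 0 /\ t * c <= 0.
Proof.
move=> al0 ga0.
set D := be ^+ 2 - al * ga.
have D0 : 0 <= D by rewrite /D; nra.
set r := Num.sqrt D.
have r0 : 0 <= r := sqrtr_ge0 D.
have r2 : r ^+ 2 = D by rewrite sqr_sqrtr.
have hag : al * ga <= 0 by nra.
have r2' : r ^+ 2 = be ^+ 2 - al * ga by rewrite r2.
clearbody r D.
have rb1 : - be <= r by nra.
have rb2 : be <= r by nra.
have al0' : al != 0 by rewrite gt_eqF.
have gen : forall t, al * t = - be - r \/ al * t = - be + r ->
    al * t ^+ 2 + 2 * be * t + ga = 0.
  move=> t ht.
  have : al * (al * t ^+ 2 + 2 * be * t + ga) = 0.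
    have -> : al * (al * t ^+ 2 + 2 * be * t + ga)
              = (al * t) ^+ 2 + 2 * be * (al * t) + al * ga by ring.
    case: ht => ->.
      have -> : (- be - r) ^+ 2 + 2 * be * (- be - r) + al * ga = r ^+ 2 - (be ^+ 2 - al * ga) by ring.
      by rewrite r2' subrr.
    have -> : (- be + r) ^+ 2 + 2 * be * (- be + r) + al * ga = r ^+ 2 - (be ^+ 2 - al * ga) by ring.
    by rewrite r2' subrr.
  by move/eqP; rewrite mulf_eq0 (negbTE al0') /= => /eqP.
case: (lerP 0 c) => hc.
  exists ((- be - r) / al).
  have ht : al * ((- be - r) / al) = - be - r by rewrite mulrC divfK.
  split; first by apply: gen; left.
  have : (- be - r) / al <= 0 by nra.
  nra.
exists ((- be + r) / al).
have ht : al * ((- be + r) / al) = - be + r by rewrite mulrC divfK.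
split; first by apply: gen; right.
have : 0 <= (- be + r) / al by nra.
nra.
Qed.

Theorem corollary2 (R : realType) (n p : nat) (A : 'M[R]_n) (lam : R)
  (a x0 : 'cV[R]_n) (b : 'I_p -> 'cV[R]_n) (u : R) (beta : 'I_p -> R) :
  A^T = A ->
  ~ psd A ->
  is_lambda_min A lam ->
  (* dim span({b_1..b_p} ∪ R(A - lam I)) <= n - 1; R(M) = row space of M^T *)
  (\rank (col_mx (rows_of b) (A - lam%:M)^T) <= n.-1)%N ->
  forall v : R,
    is_opt_value (feasible x0 u b beta) (fun x => qform A x + dotv a x) v <->
    is_opt_value (feasible x0 u b beta)
      (fun x => qform (A - lam%:M) x + dotv a x
                + lam * (u + 2 * dotv x x0 - sqnorm x0)) v.
Proof.
move=> sA npsd hlam hrank v.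
have sM : (A - lam%:M)^T = A - lam%:M by rewrite linearB /= tr_scalar_mx sA.
have [x Hx] : exists x : 'cV[R]_n, qform A x < 0.
  move: npsd; rewrite /psd => /existsNP [x hx]; exists x.
  by rewrite ltNge; apply/negP.
have lam0 : lam <= 0.
  have hQ : Qf A x^T < 0 by rewrite /Qf trmxK.
  have [m m0 em] := neg_eig A x^T sA hQ.
  exact: le_trans (hlam.2 m em) (ltW m0).
have n0 : (0 < n)%N.
  rewrite lt0n; apply/negP => /eqP n0.
  have x0' : x = 0.
    apply/matrixP => i j; have := ltn_ord i; rewrite [X in (_ < X)%N -> _]n0 ltn0 //.
  by move: Hx; rewrite x0' /qform mulmx0 mxE ltxx.
have [d d0 [bd Md]] : exists2 d : 'cV[R]_n, d != 0 &
    ((forall i, dotv (b i) d = 0) /\ (A - lam%:M) *m d = 0).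
  set K := col_mx (rows_of b) (A - lam%:M)^T.
  have rk : (\rank K^T < n)%N.
    by rewrite mxrank_tr; apply: leq_ltn_trans hrank _; rewrite ltn_predL.
  have : kermx K^T != 0 by rewrite -mxrank_eq0 mxrank_ker subn_eq0 -ltnNge rk.
  case/rowV0Pn => w /sub_kermxP wK w0.
  exists w^T.
    by apply: contra w0 => /eqP h; rewrite -[w]trmxK h trmx0.
  have KW : K *m w^T = 0 by rewrite -[K]trmxK -trmx_mul wK trmx0.
  move: KW; rewrite mul_col_mx => /eqP; rewrite col_mx_eq0 => /andP[/eqP h1 /eqP h2].
  split; last by rewrite -sM.
  move=> i; transitivity ((rows_of b *m w^T) i 0); last by rewrite h1 mxE.
  by rewrite /dotv !mxE; apply: eq_bigr => j _; rewrite !mxE.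
pose f := (fun x : 'cV[R]_n => qform A x + dotv a x).
pose g := (fun x : 'cV[R]_n => qform (A - lam%:M) x + dotv a x
                + lam * (u + 2 * dotv x x0 - sqnorm x0)).
change (is_opt_value (feasible x0 u b beta) f v <-> is_opt_value (feasible x0 u b beta) g v).
have fg : forall y, f y - g y = lam * (sqnorm (y - x0) - u).
  move=> y; rewrite /f /g qformB /sqnorm dotvBl !dotvBr (dotvC x0 y); ring.
have gle : forall y, feasible x0 u b beta y -> g y <= f y.
  move=> y [hy _]; have := fg y.
  have : 0 <= lam * (sqnorm (y - x0) - u) by apply: mulr_le0 => //; rewrite subr_le0.
  lra.
have bnd : forall y, feasible x0 u b beta y ->
    exists2 z, feasible x0 u b beta z & f z = g z /\ g z <= g y.
  move=> y [hy hb].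
  have hy' : sqnorm (y - x0) - u <= 0 by rewrite subr_le0.
  have [t [ht tc]] := @quad R _ (dotv (y - x0) d) _ (dotv a d + lam * 2 * dotv d x0)
    (sqnorm_gt0 _ d0) hy'.
  have hz : sqnorm (y + t *: d - x0) = u.
    have -> : y + t *: d - x0 = (y - x0) + t *: d by rewrite addrAC.
    rewrite sqnormDZ; lra.
  exists (y + t *: d).
    split; first by rewrite hz.
    by move=> i; rewrite dotvDr dotvZr bd mulr0 addr0.
  split.
    by apply/eqP; rewrite -subr_eq0 fg hz subrr mulr0.
  have hMd : (A - lam%:M) *m (y + t *: d) = (A - lam%:M) *m y.
    by rewrite mulmxDr -scalemxAr Md scaler0 addr0.
  have hdM : dotv d ((A - lam%:M) *m y) = 0.
    by rewrite dotv_mul sM Md /dotv trmx0 mul0mx mxE.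
  have -> : g (y + t *: d) = g y + t * (dotv a d + lam * 2 * dotv d x0).
    rewrite /g !qformE hMd dotvDl dotvZl hdM !dotvDr dotvDl dotvZr dotvZl; ring.
  nra.
split.
  case=> [[y Fy fy] low]; split.
    have [z Fz [fz gz]] := bnd y Fy.
    exists z => //; apply/eqP; rewrite eq_le; apply/andP; split.
      by have := gle y Fy; lra.
    by rewrite -fz; exact: low.
  move=> y' Fy'; have [z Fz [fz gz]] := bnd y' Fy'; have := low z Fz; lra.
case=> [[y Fy gy] low]; split.
  have [z Fz [fz gz]] := bnd y Fy.
  exists z => //; apply/eqP; rewrite eq_le; apply/andP; split.
    by rewrite fz; lra.
  by rewrite fz; exact: low.
move=> y' Fy'; have := gle y' Fy'; have := low y' Fy'; lra.
Qed.
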